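(* Let $\mathbf{D}\in\mathbb{R}^{d\times n}$ be arbitrary, $1\le s\le n$, $\gamma>0$, and $\mathbf{g}\sim N(\mathbf{0},\mathbf{I}_d)$. Then \[ w(\mathbf{D}S_\gamma)\ \le\ \mathbb{E}\min_{\mathbf{z}\in K_{\gamma,s}^*}\big\|(\mathbf{D}^\top\mathbf{g})^*+\mathbf{z}\big\|_2. \]
   Context: $S_\gamma:=\{\mathbf{x}\in\mathbb{R}^n:\|\mathbf{x}\|_2=1,\ \|\mathbf{x}_T\|_1\ge\gamma\|\mathbf{x}_{T^c}\|_1\text{ for some }T\subset[n],|T|\le s\}$, where $\mathbf{x}_T$ agrees with $\mathbf{x}$ on $T$ and is $0$ elsewhere. $\mathbf{D}S_\gamma=\{\mathbf{D}\mathbf{x}:\mathbf{x}\in S_\gamma\}$ and $w(T)=\mathbb{E}\sup_{\mathbf{x}\in T}\langle\mathbf{g},\mathbf{x}\rangle$ is the Gaussian width. $K_{\gamma,s}:=\{\mathbf{u}\in\mathbb{R}^n: u_\ell\ge0\ \forall\ell,\ \sum_{\ell=1}^s u_\ell\ge\gamma\sum_{\ell=s+1}^n u_\ell\}$ and $K_{\gamma,s}^*:=\{\mathbf{z}\in\mathbb{R}^n:\langle\mathbf{z},\mathbf{u}\rangle\ge0\ \forall\mathbf{u}\in K_{\gamma,s}\}$ is its dual cone. For $\mathbf{x}\in\mathbb{R}^n$, the nonincreasing rearrangement $\mathbf{x}^*$ satisfies $x_1^*\ge\dots\ge x_n^*\ge0$ with $x_i^*=|x_{\pi(i)}|$ for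 some permutation $\pi$. *)

(* Defs.v *)
From HB Require Import structures.
From mathcomp Require Import all_boot all_order all_algebra.
From mathcomp Require Import all_classical all_reals all_analysis.
Set Implicit Arguments. Unset Strict Implicit. Unset Printing Implicit Defensive.
Import Order.TTheory GRing.Theory Num.Theory.
Local Open Scope classical_set_scope.
Local Open Scope ring_scope.

Section defs.
Context {R : realType}.

Definition dotv (n : nat) (a b : 'cV[R]_n) : R := \sum_(i < n) a i 0 * b i 0.
Definition l1norm (n : nat) (x : 'cV[R]_n) : R := \sum_(i < n) `|x i 0|.
Definition l2norm (n : nat) (x : 'cV[R]_n) : R := Num.sqrt (\sum_(i < n) x i 0 ^+ 2).

Definition restr (n : nat) (T : {set 'I_n}) (x : 'cV[R]_n) : 'cV[R]_n :=
  \col_i (if i \in T then x i 0 else 0).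

Definition S_gamma (n s : nat) (gamma : R) : set 'cV[R]_n :=
  [set x | l2norm x = 1 /\
     exists T : {set 'I_n}, (#|T| <= s)%N /\
       gamma * l1norm (restr (~: T) x) <= l1norm (restr T x)].

(* K_{gamma,s}; coordinates l = 1..s are the indices i < s (0-based) *)
Definition K_cone (n s : nat) (gamma : R) : set 'cV[R]_n :=
  [set u | (forall i, 0 <= u i 0) /\
     gamma * (\sum_(i < n | (s <= i)%N) u i 0) <= \sum_(i < n | (i < s)%N) u i 0].

Definition dual_cone (n : nat) (K : set 'cV[R]_n) : set 'cV[R]_n :=
  [set z | forall u, K u -> 0 <= dotv z u].

Definition rearr (n : nat) (x : 'cV[R]_n) : 'cV[R]_n :=
  \col_i nth 0 (sort (fun a b : R => b <= a) [seq `|x j 0| | j <- enum 'I_n]) i.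

(* Expectation of a [0,+oo]-valued function of g ~ N(0, I_d), written as an
   iterated integral against the one-dimensional standard normal law
   (coordinates of g are independent N(0,1)). *)
Fixpoint gauss_exp (d : nat) : ('cV[R]_d -> \bar R) -> \bar R :=
  match d return ('cV[R]_d -> \bar R) -> \bar R with
  | 0 => fun f => f 0
  | d'.+1 => fun f =>
      (\int[normal_prob 0 1]_t gauss_exp (fun v : 'cV[R]_d' =>
          f (col_mx (const_mx t : 'cV[R]_1) v)))%E
  end.

Definition gwidth (d : nat) (T : set 'cV[R]_d) : \bar R :=
  gauss_exp (fun g => ereal_sup [set (dotv g y)%:E | y in T]).

End defs.

(* Main.v *)
Require Import Defs.
From HB Require Import structures.
From mathcomp Require Import all_boot all_order all_algebra.
From mathcomp Require Import all_classical all_reals all_analysis.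
Import Order.TTheory GRing.Theory Num.Theory.
Local Open Scope classical_set_scope.
Local Open Scope ring_scope.

Lemma integral_mono (R : realType) dd (T : measurableType dd)
  (mu : {measure set T -> \bar R}) (f g : T -> \bar R) :
  (forall x, f x <= g x)%E -> (\int[mu]_x f x <= \int[mu]_x g x)%E.
Proof.
move=> fg; have fg' : {in [set: T], forall x, (f \_ setT) x <= (g \_ setT) x}%E.
  by move=> x _; rewrite /patch !in_setT.
rewrite /integral; apply: leeB; apply: ereal_sup_le;
  move=> _ [h /= hf <-]; exists h => //= x; apply: (le_trans (hf x)).
- exact: (funepos_le fg' (in_setT x)).
- exact: (funeneg_le fg' (in_setT x)).
Qed.

Lemma gauss_exp_mono (R : realType) (d : nat) (f g : 'cV[R]_d -> \bar R) :
  (forall x, f x <= g x)%E -> (gauss_exp f <= gauss_exp g)%E.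
Proof.
elim: d f g => [|d IH] f g fg /=; first exact: fg.
apply: integral_mono => t; apply: IH => v; exact: fg.
Qed.
From mathcomp Require Import lra zify.

Notation geR := (fun a b => b <= a).

Lemma geR_trans (R : realType) : transitive (geR : rel R).
Proof. by move=> y x z /= hyx hzy; apply: le_trans hzy hyx. Qed.
Lemma geR_anti (R : realType) : antisymmetric (geR : rel R).
Proof. by move=> x y /andP[h1 h2]; apply/eqP; rewrite eq_le h1 h2. Qed.
Lemma geR_total (R : realType) : total (geR : rel R).
Proof. by move=> x y; rewrite orbC le_total. Qed.

Lemma sort_cons (R : realType) (s t : seq R) (m : R) :
  perm_eq s (m :: t) -> all (fun y => y <= m) t ->
  sort geR s = m :: sort geR t.
Proof.
move=> pst allm; apply: (sorted_eq (@geR_trans R) (@geR_anti R)).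
- exact: (sort_sorted (@geR_total R)).
- rewrite /= (path_sortedE (@geR_trans R)) all_sort allm /=.
  exact: (sort_sorted (@geR_total R)).
- rewrite perm_sort; apply: (perm_trans pst); by rewrite perm_cons perm_sym perm_sort.
Qed.

Lemma sort_head_max (R : realType) (s : seq R) (A : R) (t : seq R) :
  sort geR s = A :: t -> A \in s /\ all (fun y => y <= A) s.
Proof.
move=> hs; split; first by rewrite -(mem_sort geR) hs mem_head.
have := sort_sorted (@geR_total R) s; rewrite hs /= (path_sortedE (@geR_trans R)).
move=> /andP[ht _]; rewrite -(all_sort _ geR) hs /= lexx /=; exact: ht.
Qed.
Arguments sort_head_max {R s A t}.
Lemma rearr_ineq (R : realType) (r : seq (R * R)) :
  \sum_(p <- r) p.1 * p.2 <=
  \sum_(p <- zip (sort geR (map fst r)) (sort geR (map snd r))) p.1 * p.2.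
Proof.
move: {2}(size r) (erefl (size r)) => k; elim: k r => [|k IH] r hr.
  by case: r hr => // _; rewrite /= !big_nil.
case hsa: (sort geR (map fst r)) => [|A sa'].
  by move: (size_sort geR (map fst r)); rewrite hsa size_map hr.
case hsb: (sort geR (map snd r)) => [|B sb'].
  by move: (size_sort geR (map snd r)); rewrite hsb size_map hr.
have [Ain Amax] := sort_head_max hsa.
have [Bin Bmax] := sort_head_max hsb.
case/mapP: Ain => pA pAin hA.
have pr := perm_to_rem pAin.
set r1 := rem pA r in pr.
have sr1 : size r1 = k by rewrite (perm_size pr) in hr; case: hr.
rewrite (perm_big _ pr) big_cons /= big_cons /=.
case: (eqVneq pA.2 B) => hB.
  have e1 : sort geR (map fst r) = A :: sort geR (map fst r1).
    apply: sort_cons; first by rewrite hA; exact: (perm_map fst pr).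
    by move: Amax; rewrite (perm_all _ (perm_map fst pr)) /= => /andP[].
  have e2 : sort geR (map snd r) = B :: sort geR (map snd r1).
    apply: sort_cons; first by rewrite -hB; exact: (perm_map snd pr).
    by move: Bmax; rewrite (perm_all _ (perm_map snd pr)) /= => /andP[].
  move: hsa hsb; rewrite e1 e2 => -[<-] [<-]; rewrite hA hB.
  by apply: lerD => //; exact: IH.
have : B \in map snd r1.
  by move: Bin; rewrite (perm_mem (perm_map snd pr)) /= in_cons eq_sym (negbTE hB).
case/mapP => q qin hq.
have pr2 := perm_to_rem qin.
set r2 := rem q r1 in pr2.
have pr' : perm_eq r (pA :: q :: r2) by apply: (perm_trans pr); rewrite perm_cons.
set r' := (q.1, pA.2) :: r2.
have sr' : size r' = k by rewrite /r' -sr1 (perm_size pr2).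
have e1 : sort geR (map fst r) = A :: sort geR (map fst r').
  apply: sort_cons; first by rewrite hA; exact: (perm_map fst pr').
  by move: Amax; rewrite (perm_all _ (perm_map fst pr')) /= => /andP[].
have pS : perm_eq (map snd r) (B :: map snd r').
  apply: (perm_trans (perm_map snd pr')); rewrite /= hq.
  by rewrite (perm_catCA [:: pA.2] [:: q.2]).
have e2 : sort geR (map snd r) = B :: sort geR (map snd r').
  apply: sort_cons => //.
  by move: Bmax; rewrite (perm_all _ pS) /= => /andP[].
move: hsa hsb; rewrite e1 e2 => -[<-] [<-].
rewrite (perm_big _ pr2) big_cons /=.
have := IH r' sr'; rewrite /r' big_cons /= => h.
have hq1 : q.1 <= A.
  by move: Amax => /allP; apply; rewrite (perm_mem (perm_map fst pr')) /= !in_cons eqxx orbT.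
have hp2 : pA.2 <= B.
  by move: Bmax => /allP; apply; apply: map_f.
rewrite /r' /=.
suff : pA.1 * pA.2 + q.1 * q.2 <= A * B + q.1 * pA.2 by move: h; rewrite hA hq; lra.
have : 0 <= (A - q.1) * (B - pA.2) by apply: mulr_ge0; rewrite subr_ge0.
rewrite hA hq; nra.
Qed.

Lemma rearrE {R : realType} {n : nat} (x : 'cV[R]_n) (i : 'I_n) :
  rearr x i 0 = nth 0 (sort geR [seq `|x j 0| | j <- enum 'I_n]) i.
Proof. by rewrite /rearr mxE. Qed.

Lemma size_sortI {R : realType} {n : nat} (f : 'I_n -> R) :
  size (sort geR [seq f j | j <- enum 'I_n]) = n.
Proof. by rewrite size_sort size_map size_enum_ord. Qed.

Lemma sum_nth_zip {R : realType} {n : nat} (s t : seq R) :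
  size s = n -> size t = n ->
  \sum_(i < n) nth 0 s i * nth 0 t i = \sum_(p <- zip s t) p.1 * p.2.
Proof.
move=> hs ht; rewrite (big_nth (0,0)) size_zip hs ht minnn big_mkord.
by apply: eq_bigr => i _; rewrite nth_zip ?hs ?ht.
Qed.

Lemma sum_enumI {R : realType} {n : nat} (F : 'I_n -> R) :
  \sum_(j <- enum 'I_n) F j = \sum_j F j.
Proof. by rewrite big_enum; apply: eq_bigl => j. Qed.

Lemma bridge {R : realType} {n : nat} (f g : 'I_n -> R) :
  \sum_j f j * g j <=
  \sum_(i < n) nth 0 (sort geR [seq f j | j <- enum 'I_n]) i *
               nth 0 (sort geR [seq g j | j <- enum 'I_n]) i.
Proof.
have h := @rearr_ineq R [seq (f j, g j) | j <- enum 'I_n].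
have e1 : [seq p.1 | p <- [seq (f j, g j) | j <- enum 'I_n]] = [seq f j | j <- enum 'I_n].
  by rewrite -map_comp.
have e2 : [seq p.2 | p <- [seq (f j, g j) | j <- enum 'I_n]] = [seq g j | j <- enum 'I_n].
  by rewrite -map_comp.
rewrite e1 e2 big_map sum_enumI in h.
by rewrite sum_nth_zip ?size_sortI.
Qed.

Lemma sum_rearr {R : realType} {n : nat} (F : R -> R) (x : 'cV[R]_n) :
  \sum_(i < n) F (rearr x i 0) = \sum_j F `|x j 0|.
Proof.
under eq_bigr do rewrite rearrE.
transitivity (\sum_(y <- sort geR [seq `|x j 0| | j <- enum 'I_n]) F y).
  by rewrite (big_nth 0) size_sortI big_mkord.
by rewrite (perm_big _ (permEl (perm_sort _ _))) big_map sum_enumI.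
Qed.

Lemma rearr_ge0 {R : realType} {n : nat} (x : 'cV[R]_n) i : 0 <= rearr x i 0.
Proof.
rewrite rearrE; set s := sort _ _.
have : nth 0 s i \in s by rewrite mem_nth // size_sortI.
by rewrite mem_sort => /mapP[j _ ->].
Qed.

Lemma map_cst (T : Type) (R : Type) (c : R) (s : seq T) :
  [seq c | _ <- s] = nseq (size s) c.
Proof. by elim: s => //= a s ->. Qed.

Lemma sorted_ones (R : realType) k m :
  sorted geR (nseq k (1:R) ++ nseq m 0).
Proof.
have h0 : sorted geR (nseq m (0:R)).
  elim: m => [|[|m] IH] //=; rewrite lexx; exact: IH.
elim: k => [|[|k] IH] //=.
  by clear IH; case: m h0 => //= m ->; rewrite ler01.
by move: IH; rewrite /= lexx.
Qed.

Lemma sort_ind {R : realType} {n : nat} (T : {set 'I_n}) :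
  sort geR [seq ((j \in T)%:R : R) | j <- enum 'I_n] =
  nseq #|T| 1 ++ nseq (n - #|T|)%N 0.
Proof.
apply: (sorted_eq (@geR_trans R) (@geR_anti R)).
- exact: (sort_sorted (@geR_total R)).
- exact: sorted_ones.
rewrite perm_sort.
have hp : perm_eq (enum 'I_n) ([seq x <- enum 'I_n | mem T x] ++ [seq x <- enum 'I_n | predC (mem T) x]).
  by rewrite perm_sym; exact: (permEl (perm_filterC (mem T) (enum 'I_n))).
apply: (perm_trans (perm_map _ hp)).
rewrite map_cat.
have e1 : [seq ((j \in T)%:R : R) | j <- [seq x <- enum 'I_n | mem T x]] =
          [seq 1 | _ <- [seq x <- enum 'I_n | mem T x]].
  by apply/eq_in_map => j; rewrite mem_filter => /andP[hj _]; have -> : j \in T := hj.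
have e2 : [seq ((j \in T)%:R : R) | j <- [seq x <- enum 'I_n | predC (mem T) x]] =
          [seq 0 | _ <- [seq x <- enum 'I_n | predC (mem T) x]].
  by apply/eq_in_map => j; rewrite mem_filter => /andP[hj _]; have -> : (j \in T) = false by apply/negbTE.
have hc : size [seq x <- enum 'I_n | mem T x] = #|T|.
  by rewrite enumT cardE /enum_mem.
have hc' : size [seq x <- enum 'I_n | predC (mem T) x] = (n - #|T|)%N.
  have := count_predC (mem T) (enum 'I_n).
  rewrite size_enum_ord -!size_filter -hc.
  set a := size [seq x <- enum 'I_n | mem T x].
  set b := size [seq x <- enum 'I_n | predC (mem T) x]; move=> h; lia.
by rewrite e1 e2 !map_cst hc hc'.
Qed.

Lemma l1_restr_le {R : realType} {n : nat} (x : 'cV[R]_n) (T : {set 'I_n}) s :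
  (#|T| <= s)%N -> l1norm (restr T x) <= \sum_(i < n | (i < s)%N) rearr x i 0.
Proof.
move=> hT.
have e : l1norm (restr T x) = \sum_j `|x j 0| * ((j \in T)%:R : R).
  rewrite /l1norm; apply: eq_bigr => j _; rewrite mxE.
  by case: (j \in T); rewrite /= ?mulr1 ?mulr0 ?normr0.
rewrite e; apply: le_trans (bridge (fun j => `|x j 0|) (fun j => ((j \in T)%:R : R))) _; rewrite sort_ind [leRHS]big_mkcond /=.
apply: ler_sum => i _; rewrite -rearrE nth_cat size_nseq !nth_nseq.
case: (ltnP i #|T|) => hi; first by rewrite mulr1 (leq_trans hi hT).
rewrite if_same mulr0; case: ifP => _ //; exact: rearr_ge0.
Qed.

Lemma rearr_K {R : realType} {n : nat} s (gamma : R) (x : 'cV[R]_n) :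
  0 < gamma ->
  (exists T : {set 'I_n}, (#|T| <= s)%N /\
       gamma * l1norm (restr (~: T) x) <= l1norm (restr T x)) ->
  K_cone s gamma (rearr x).
Proof.
move=> g0 [T [hT hg]]; split; first by move=> i; exact: rearr_ge0.
have htot : \sum_(i < n) rearr x i 0 = l1norm (restr T x) + l1norm (restr (~: T) x).
  rewrite (sum_rearr id) /l1norm -big_split; apply: eq_bigr => j _ /=.
  rewrite !mxE finset.in_setC; by case: (j \in T); rewrite /= normr0 ?addr0 ?add0r.
have hsplit : \sum_(i < n) rearr x i 0 =
   \sum_(i < n | (i < s)%N) rearr x i 0 + \sum_(i < n | (s <= i)%N) rearr x i 0.
  rewrite (bigID (fun i : 'I_n => (i < s)%N)) /=; congr (_ + _).
  by apply: eq_bigl => i; rewrite -leqNgt.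
have htop := @l1_restr_le _ _ x T s hT.
set top := \sum_(i < n | (i < s)%N) rearr x i 0 in hsplit htop *.
set tail := \sum_(i < n | (s <= i)%N) rearr x i 0 in hsplit *.
have htl : tail <= l1norm (restr (~: T) x) by lra.
have := ler_wpM2l (ltW g0) htl; lra.
Qed.

Lemma dot_mul (R : realType) d n (D : 'M[R]_(d, n)) g x :
  dotv g (D *m x) = dotv (D^T *m g) x.
Proof.
rewrite /dotv; under eq_bigr do rewrite mxE big_distrr /=.
rewrite exchange_big /=; apply: eq_bigr => j _; rewrite mxE big_distrl /=.
by apply: eq_bigr => i _; rewrite mxE; lra.
Qed.

Lemma dot_le_rearr {R : realType} {n : nat} (a x : 'cV[R]_n) :
  dotv a x <= dotv (rearr a) (rearr x).
Proof.
apply: (@le_trans _ _ (\sum_j `|a j 0| * `|x j 0|)).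
  by apply: ler_sum => j _; rewrite -normrM ler_norm.
apply: le_trans (bridge (fun j => `|a j 0|) (fun j => `|x j 0|)) _; rewrite /dotv.
by under [leRHS]eq_bigr do rewrite !rearrE.
Qed.

Lemma dotvDl {R : realType} {n : nat} (a z u : 'cV[R]_n) :
  dotv (a + z) u = dotv a u + dotv z u.
Proof.
by rewrite /dotv -big_split; apply: eq_bigr => i _; rewrite mxE mulrDl.
Qed.

Lemma cs_le {R : realType} {n : nat} (w u : 'cV[R]_n) :
  \sum_i u i 0 ^+ 2 = 1 -> dotv w u <= l2norm w.
Proof.
move=> hu; rewrite /l2norm /dotv.
set S := \sum_i w i 0 ^+ 2.
have S0 : 0 <= S by apply: sumr_ge0 => i _; exact: sqr_ge0.
set c := Num.sqrt S.
have c0 : 0 <= c by exact: sqrtr_ge0.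
have hc2 : c ^+ 2 = S by rewrite sqr_sqrtr.
have [c0e|cn0] := eqVneq c 0.
  have S00 : S = 0 by rewrite -hc2 c0e expr0n.
  rewrite big1 // => i _.
  have := psumr_eq0P (fun i _ => sqr_ge0 (w i 0)) S00 (i := i) isT.
  by move/eqP; rewrite sqrf_eq0 => /eqP ->; rewrite mul0r.
have cp : 0 < c by rewrite lt_def cn0 c0.
have key : 2 * c * (\sum_i w i 0 * u i 0) <= S + c ^+ 2 * \sum_i u i 0 ^+ 2.
  rewrite !mulr_sumr -big_split /=; apply: ler_sum => i _.
  have := sqr_ge0 (w i 0 - c * u i 0); nra.
rewrite hu mulr1 hc2 in key.
have : 2 * c * (\sum_i w i 0 * u i 0) <= 2 * c * c by rewrite -hc2 in key; lra.
by rewrite ler_pM2l ?mulr_gt0.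
Qed.

Lemma sumsq_rearr {R : realType} {n : nat} (x : 'cV[R]_n) :
  \sum_i rearr x i 0 ^+ 2 = \sum_i x i 0 ^+ 2.
Proof.
rewrite (sum_rearr (fun y => y ^+ 2)); apply: eq_bigr => j _.
by rewrite real_normK ?num_real.
Qed.

Lemma pointwise (R : realType) d n s (D : 'M[R]_(d, n)) (gamma : R) (g : 'cV[R]_d)
  (x : 'cV[R]_n) (z : 'cV[R]_n) :
  0 < gamma -> S_gamma s gamma x -> dual_cone (K_cone s gamma) z ->
  dotv g (D *m x) <= l2norm (rearr (D^T *m g) + z).
Proof.
move=> g0 [hx hT] hz.
have hK := @rearr_K _ _ s gamma x g0 hT.
have hu : \sum_i rearr x i 0 ^+ 2 = 1.
  rewrite sumsq_rearr; move: hx; rewrite /l2norm => h.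
  by rewrite -(@sqr_sqrtr _ (\sum_i x i 0 ^+ 2)) ?h ?expr1n //;
     apply: sumr_ge0 => i _; exact: sqr_ge0.
rewrite dot_mul; apply: le_trans (dot_le_rearr _ _) _.
apply: le_trans _ (cs_le (rearr (D^T *m g) + z) _ hu); rewrite dotvDl lerDl; exact: hz.
Qed.

Theorem lemma4p5 (R : realType) (d n s : nat) (D : 'M[R]_(d, n)) (gamma : R) :
  (1 <= s <= n)%N -> 0 < gamma ->
  (gwidth [set D *m x | x in S_gamma s gamma] <=
   gauss_exp (fun g : 'cV[R]_d =>
     ereal_inf [set (l2norm (rearr (D^T *m g) + z))%:E
               | z in dual_cone (K_cone s gamma)]))%E.
Proof.
move=> _ g0; rewrite /gwidth; apply: gauss_exp_mono => g.
apply: ge_ereal_sup => _ [_ [x hx <-] <-].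
apply: le_ereal_inf_tmp => _ [z hz <-].
rewrite lee_fin; exact: (@pointwise R d n s D gamma g x z g0 hx hz).
Qed.
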